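(* Let $\langle B,\wedge,{}'\rangle$ be an algebra with $\wedge$ binary and ${}'$ unary satisfying $x\wedge y\approx y\wedge x$, $x\wedge(y\wedge z)\approx(x\wedge y)\wedge z$, $x''\approx x$, and $x'\approx (x\wedge y)'\wedge(x\wedge y')'$. Then for all $x,y,z\in B$, writing $0=z\wedge z'$, we have $0'\wedge[(x\wedge y)\wedge(x\wedge y)]'=[y\wedge(x\wedge y)]'$.
   Context: In such an algebra the element $z\wedge z'$ does not depend on $z$; the paper denotes it $0$. *)


Theorem lemma2p8 (B : Type) (meet : B -> B -> B) (c : B -> B)
  (Hcomm : forall x y, meet x y = meet y x)
  (Hassoc : forall x y z, meet x (meet y z) = meet (meet x y) z)
  (Hinv : forall x, c (c x) = x)
  (Hax : forall x y, c x = meet (c (meet x y)) (c (meet x (c y)))) :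
  forall x y z : B,
    meet (c (meet z (c z))) (c (meet (meet x y) (meet x y)))
    = c (meet y (meet x y)).
Proof.
  assert (perm : forall a b d, meet a (meet b d) = meet b (meet a d)).
  { intros a b d. rewrite (Hassoc a b d), (Hcomm a b), <- (Hassoc b a d). reflexivity. }
  assert (swap4 : forall P Q R S, meet (meet P Q) (meet R S) = meet (meet S Q) (meet R P)).
  { intros P Q R S. rewrite <- (Hassoc P Q), <- (Hassoc S Q).
    rewrite (Hcomm R S), (perm Q S R), (perm P S), (perm P Q R), (Hcomm P R). reflexivity. }
  assert (K : forall a b, meet a (c a) = meet b (c b)).
  { intros a b.
    assert (E1: a = meet (c (meet (c a) b)) (c (meet (c a) (c b)))) by (rewrite <- Hax; rewrite Hinv; reflexivity).
    assert (E2 := Hax a b).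
    assert (E3: b = meet (c (meet (c b) a)) (c (meet (c b) (c a)))) by (rewrite <- Hax; rewrite Hinv; reflexivity).
    assert (E4 := Hax b a).
    transitivity (meet (meet (c (meet (c a) b)) (c (meet (c a) (c b)))) (meet (c (meet a b)) (c (meet a (c b))))).
    { rewrite <- E1, <- E2. reflexivity. }
    transitivity (meet (meet (c (meet (c b) a)) (c (meet (c b) (c a)))) (meet (c (meet b a)) (c (meet b (c a))))).
    2: { rewrite <- E3, <- E4. reflexivity. }
    rewrite swap4. rewrite (Hcomm (c b) a), (Hcomm (c b) (c a)), (Hcomm b a), (Hcomm b (c a)).
    reflexivity. }
  intros x y z.
  set (O := meet z (c z)).
  assert (KO : forall a, meet a (c a) = O) by (intro a; apply K).
  set (I := c O).
  assert (A : forall a, c a = meet (c (meet a a)) I).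
  { intro a. rewrite (Hax a a). rewrite KO. reflexivity. }
  assert (IO : meet I O = O).
  { pose proof (KO I) as H. unfold I in H |- *. rewrite Hinv in H. exact H. }
  assert (uI : meet (c (meet O O)) I = I).
  { unfold I at 2. rewrite <- (A O). reflexivity. }
  assert (OO : meet O O = O).
  { rewrite <- (Hinv (meet O O)).
    rewrite (Hax (c (meet O O)) I).
    rewrite uI.
    assert (H1 : meet (c (meet O O)) (c I) = O).
    { assert (cI : c I = O) by (unfold I; apply Hinv). rewrite cI.
      transitivity (meet (c (meet O O)) (meet I O)); [rewrite IO; reflexivity|].
      rewrite Hassoc, uI. exact IO. }
    rewrite H1. assert (cI : c I = O) by (unfold I; apply Hinv). rewrite cI. fold I.
    rewrite Hcomm. exact IO. }
  assert (II : meet I I = I).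
  { pose proof (A O) as H. fold I in H. rewrite OO in H. fold I in H. symmetry. exact H. }
  assert (xI : forall a, meet a I = a).
  { intro a. pose proof (A (c a)) as H. rewrite Hinv in H.
    transitivity (meet (meet (c (meet (c a) (c a))) I) I); [rewrite <- H; reflexivity|].
    rewrite <- Hassoc, II. symmetry. exact H. }
  assert (idem : forall a, meet a a = a).
  { intro a. pose proof (A a) as H. rewrite xI in H.
    rewrite <- (Hinv (meet a a)), <- H, Hinv. reflexivity. }
  fold O. fold I. rewrite Hcomm, xI, idem.
  rewrite Hassoc, (Hcomm y x), <- Hassoc, idem. reflexivity.
Qed.
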